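(* Let $d$ be a positive integer. Every $312$-avoiding affine permutation in $\widetilde{\mathfrak S}_d$ has a cut point.
   Context: An affine permutation $\pi\in\widetilde{\mathfrak S}_d$ is a bijection $\pi:\mathbb Z\to\mathbb Z$ such that $\pi(i+d)=\pi(i)+d$ for all $i\in\mathbb Z$ and $\sum_{i=0}^{d-1}(\pi(i)-i)=0$. It is $312$-avoiding if there are no integers $i<j<k$ with $\pi(j)<\pi(k)<\pi(i)$. A cut point of $\pi$ is an integer $j$ such that $\pi(i)<\pi(k)$ for all integers $i\le j<k$. *)

(* Defs.v *)
From Stdlib Require Import ZArith Lia.
Open Scope Z_scope.

Fixpoint disp_sum (pi : Z -> Z) (n : nat) : Z :=
  match n with
  | O => 0
  | S m => disp_sum pi m + (pi (Z.of_nat m) - Z.of_nat m)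
  end.

Definition is_affine_perm (d : nat) (pi : Z -> Z) : Prop :=
  (forall x y, pi x = pi y -> x = y) /\
  (forall y, exists x, pi x = y) /\
  (forall i, pi (i + Z.of_nat d) = pi i + Z.of_nat d) /\
  disp_sum pi d = 0.

Definition avoids312 (pi : Z -> Z) : Prop :=
  ~ (exists i j k, i < j /\ j < k /\ pi j < pi k /\ pi k < pi i).

Definition is_cut_point (pi : Z -> Z) (j : Z) : Prop :=
  forall i k, i <= j -> j < k -> pi i < pi k.

(* Main.v *)
Require Import Defs.
From Stdlib Require Import ZArith.
From Stdlib Require Import Lia Classical.
Open Scope Z_scope.

Lemma shift_nat (pi : Z -> Z) (D : Z) :
  (forall i, pi (i + D) = pi i + D) ->
  forall n : nat, forall i, pi (i + Z.of_nat n * D) = pi i + Z.of_nat n * D.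
Proof.
  intros Hp n; induction n as [|n IH]; intro i.
  - simpl. rewrite !Z.add_0_r. reflexivity.
  - rewrite Nat2Z.inj_succ.
    replace (i + Z.succ (Z.of_nat n) * D) with ((i + Z.of_nat n * D) + D) by ring.
    rewrite Hp, IH. ring.
Qed.

Lemma shift_Z (pi : Z -> Z) (D : Z) :
  (forall i, pi (i + D) = pi i + D) ->
  forall q i, pi (i + q * D) = pi i + q * D.
Proof.
  intros Hp q i.
  destruct (Z_le_gt_dec 0 q) as [Hq|Hq].
  - replace q with (Z.of_nat (Z.to_nat q)) by lia. apply shift_nat; auto.
  - pose proof (shift_nat pi D Hp (Z.to_nat (- q)) (i + q * D)) as H.
    replace (i + q * D + Z.of_nat (Z.to_nat (- q)) * D) with i in H by lia.
    lia.
Qed.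

Lemma finite_lb (f : Z -> Z) : forall n : nat, exists L, forall r, 0 <= r < Z.of_nat n -> L <= f r.
Proof.
  induction n as [|n [L HL]].
  - exists 0. intros r Hr. lia.
  - exists (Z.min L (f (Z.of_nat n))). intros r Hr.
    destruct (Z.eq_dec r (Z.of_nat n)) as [->|Hne].
    + lia.
    + specialize (HL r ltac:(lia)). lia.
Qed.

Theorem corollary4p3 (d : nat) (pi : Z -> Z) :
  (0 < d)%nat -> is_affine_perm d pi -> avoids312 pi ->
  exists j : Z, is_cut_point pi j.
Proof.
  intros Hd [Hinj [_ [Hper _]]] Hav.
  set (D := Z.of_nat d) in *.
  assert (HD : 0 < D) by (unfold D; lia).
  destruct (finite_lb (fun r => pi r - r) d) as [L HL].
  assert (Hlb : forall j, L <= pi j - j).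
  { intro j.
    pose proof (Z.mod_pos_bound j D HD).
    pose proof (Z_div_mod_eq_full j D).
    pose proof (shift_Z pi D Hper (j / D) (j mod D)) as Hs.
    replace (j mod D + j / D * D) with j in Hs by lia.
    specialize (HL (j mod D) ltac:(unfold D in *; lia)). simpl in HL. lia. }
  destruct (Classical_Prop.classic (exists j, is_cut_point pi j)) as [H|Hno]; [exact H|].
  exfalso.
  assert (Hstep : forall j, exists k, j < k /\ pi k < pi j).
  { intro j.
    destruct (Classical_Prop.classic (exists i k, i <= j /\ j < k /\ pi k <= pi i)) as
      [[i [k [Hi [Hk Hle]]]]|Hn].
    - exists k. split; [exact Hk|].
      assert (Hki : pi k < pi i).
      { assert (pi k <> pi i) by (intro E; apply Hinj in E; lia). lia. }
      destruct (Z.eq_dec i j) as [->|Hij]; [exact Hki|].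
      assert (pi k <> pi j) by (intro E; apply Hinj in E; lia).
      destruct (Z_lt_le_dec (pi k) (pi j)) as [?|?]; [assumption|].
      exfalso. apply Hav. exists i, j, k. repeat split; lia.
    - exfalso. apply Hno. exists j. intros i k Hi Hk.
      destruct (Z_lt_le_dec (pi i) (pi k)) as [?|?]; [assumption|].
      exfalso. apply Hn. exists i, k. lia. }
  assert (Hdesc : forall n : nat, exists k, pi k - k <= pi 0 - Z.of_nat n).
  { induction n as [|n [k Hk]].
    - exists 0. lia.
    - destruct (Hstep k) as [k' [H1 H2]]. exists k'. lia. }
  destruct (Hdesc (Z.to_nat (pi 0 - L + 1))) as [k Hk].
  specialize (Hlb k). lia.
Qed.
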